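(* Let $\mathcal{P}=\{1,\dots,M\}$, fix $i\in\mathcal{P}$, let $i'\notin\mathcal{P}$ be a new element (the replica of $i$), and put $\mathcal{P}^R=\mathcal{P}\cup\{i'\}$. Let $v(\cdot,\mathcal{P})\colon 2^{\mathcal{P}}\to\mathbb{R}$ and $v(\cdot,\mathcal{P}^R)\colon 2^{\mathcal{P}^R}\to\mathbb{R}$ be characteristic functions with $v(\mathcal{P},\mathcal{P})>0$ and $v(\mathcal{P}^R,\mathcal{P}^R)>0$, and let $a_i\in\mathbb{R}$. Assume: (1) $v(S,\mathcal{P})=v(S,\mathcal{P}^R)$ for all $S\subseteq\mathcal{P}$; (2) $v(S\cup\{i\},\mathcal{P}^R)-v(S,\mathcal{P}^R)\le a_i$ for every $S\subseteq\mathcal{P}^R\setminus\{i\}$ with $i'\in S$; (3) (supermodularity) $v(R\cup\{i\},\mathcal{P})-v(R,\mathcal{P})\le v(Q\cup\{i\},\mathcal{P})-v(Q,\mathcal{P})$ for all $R\subseteq Q\subseteq\mathcal{P}\setminus\{i\}$. Then $$\phi^R(i)\le \frac{\phi(i)\,v(\mathcal{P},\mathcal{P})+a_i}{2\,v(\mathcal{P}^R,\mathcal{P}^R)}.$$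
   Context: Normalized Shapley values: for the original market, $\phi(i)=\frac{1}{v(\mathcal{P},\mathcal{P})}\sum_{S\subseteq\mathcal{P}\setminus\{i\}}\frac{|S|!\,(M-|S|-1)!}{M!}\big(v(S\cup\{i\},\mathcal{P})-v(S,\mathcal{P})\big)$, and for the market with the replica (which has $M+1$ players), $\phi^R(i)=\frac{1}{v(\mathcal{P}^R,\mathcal{P}^R)}\sum_{S\subseteq\mathcal{P}^R\setminus\{i\}}\frac{|S|!\,(M-|S|)!}{(M+1)!}\big(v(S\cup\{i\},\mathcal{P}^R)-v(S,\mathcal{P}^R)\big)$. *)

(* Defs.v *)
From HB Require Import structures.
From mathcomp Require Import all_boot all_order all_algebra.
Set Implicit Arguments. Unset Strict Implicit. Unset Printing Implicit Defensive.
Import Order.TTheory GRing.Theory Num.Theory.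
Local Open Scope ring_scope.

Definition shapley (R : realFieldType) (T : finType) (v : {set T} -> R) (i : T) : R :=
  (v [set: T])^-1 *
  \sum_(S : {set T} | i \notin S)
     ((#|S|`! * (#|T| - #|S| - 1)`!)%:R / (#|T|`!)%:R) * (v (i |: S) - v S).

(* Main.v *)
Require Import Defs.
From HB Require Import structures.
From mathcomp Require Import all_boot all_order all_algebra.
From mathcomp Require Import ring lra zify.
Set Implicit Arguments. Unset Strict Implicit. Unset Printing Implicit Defensive.
Import Order.TTheory GRing.Theory Num.Theory.
Local Open Scope ring_scope.

Lemma subC1 n (i : 'I_n) (T : {set 'I_n}) : i \notin T -> T \subset [set~ i].
Proof.
move=> iT; apply/subsetP => x xT; rewrite in_setC1.
by apply: contraNneq iT => <-.
Qed.

Lemma card_noti n (i : 'I_n.+1) (T : {set 'I_n.+1}) : i \notin T -> (#|T| <= n)%N.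
Proof.
move=> iT; have := subset_leq_card (subC1 iT).
by rewrite cardsC1 card_ord.
Qed.

Lemma level_sum (R : realFieldType) n (i : 'I_n.+1) (c : nat -> R) :
  \sum_(T : {set 'I_n.+1} | i \notin T) c #|T| = \sum_(k < n.+1) c k *+ 'C(n, k).
Proof.
rewrite (partition_big (fun T : {set 'I_n.+1} => inord #|T| : 'I_n.+1) xpredT) //=.
apply: eq_bigr => k _.
rewrite (eq_bigr (fun _ => c k)); last first.
  move=> T /andP[iT /eqP kE]; by rewrite -kE inordK // ltnS (card_noti iT).
rewrite (eq_bigl (mem [set T : {set 'I_n.+1} | (T \subset [set~ i]) & #|T| == k])).
  by rewrite sumr_const cards_draws cardsC1 card_ord.
move=> T; rewrite !inE /=.
apply/andP/andP => [[iT /eqP <-]|[sT /eqP kT]].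
  by rewrite subC1 // inordK // ltnS (card_noti iT).
have iT : i \notin T by apply/negP => /(subsetP sT); rewrite in_setC1 eqxx.
split => //; apply/eqP/val_inj; rewrite /= inordK ?ltnS ?(card_noti iT) ?kT //.
Qed.

Lemma fid (R : realFieldType) u n : (u <= n)%N ->
  ((u`! * (n-u)`!)%:R * (n%:R - 2 * u%:R) : R) =
  (n-u)%:R * ((u.+1)`! * (n-u)`!)%:R - u%:R * ((u.-1.+1)`! * (n - u.-1)`!)%:R.
Proof.
case: u => [|k] H.
  rewrite !subn0 /= mul0r subr0 !fact0 !factS fact0 /=; ring.
have -> : n = ((n - k.+1) + k.+1)%N by lia.
set m := (n - k.+1)%N.
have -> : (m + k.+1 - k.+1 = m)%N by lia.
have -> : (m + k.+1 - k.+1.-1 = m.+1)%N by rewrite /=; lia.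
rewrite !factS !natrM !natrD /=; ring.
Qed.

Lemma tele (R : realFieldType) n (i : 'I_n.+1) (g : {set 'I_n.+1} -> R) :
  (forall (T : {set 'I_n.+1}) j, i \notin T -> j \notin T -> j != i -> g T <= g (j |: T)) ->
  \sum_(T : {set 'I_n.+1} | i \notin T) ((#|T|`! * (n - #|T|)`!)%:R * (n%:R - 2 * #|T|%:R)) * g T <= 0.
Proof.
move=> mono.
pose beta t := ((t.+1)`! * (n - t)`!)%:R : R.
have H0 : 0 <= \sum_(T : {set 'I_n.+1} | i \notin T) \sum_(j in ~: (i |: T)) beta #|T| * (g (j |: T) - g T).
  apply: sumr_ge0 => T iT; apply: sumr_ge0 => j; rewrite !inE negb_or => /andP[ji jT].
  apply: mulr_ge0; first exact: ler0n.
  by rewrite subr_ge0; apply: mono.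
have EB : forall T : {set 'I_n.+1}, i \notin T ->
    \sum_(j in ~: (i |: T)) beta #|T| * g T = (n - #|T|)%:R * beta #|T| * g T.
  move=> T iT; rewrite sumr_const.
  have := cardsC (i |: T); rewrite cardsU1 iT card_ord => h.
  have -> : #|~: (i |: T)| = (n - #|T|)%N by move: #|~: (i |: T)| #|T| h => c t h; lia.
  by rewrite -mulrA mulr_natl.
have EA : \sum_(T : {set 'I_n.+1} | i \notin T) \sum_(j in ~: (i |: T)) beta #|T| * g (j |: T)
        = \sum_(U : {set 'I_n.+1} | i \notin U) (#|U|%:R * beta #|U|.-1) * g U.
  rewrite (exchange_big_dep (fun j => j != i)) /=; last first.
    by move=> T j _; rewrite !inE negb_or => /andP[].
  transitivity (\sum_(U : {set 'I_n.+1} | i \notin U) \sum_(j in U) beta #|U|.-1 * g U); last first.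
    by apply: eq_bigr => U _; rewrite sumr_const -mulrA mulr_natl.
  rewrite [RHS](exchange_big_dep (fun j => j != i)) /=; last first.
    by move=> U j iU jU; apply: contraNneq iU => <-.
  apply: eq_bigr => j ji.
  rewrite [RHS](reindex_onto (fun T => j |: T) (fun U => U :\ j)) /=; last first.
    by move=> U /andP[_ jU]; rewrite setD1K.
  apply: eq_big => T.
    rewrite !inE negb_or eqxx /= (negbTE ji) /=.
    case jT: (j \in T) => /=.
      have nE : (j |: T) :\ j != T.
        by apply/eqP => E; have := setD11 j (j |: T); rewrite E jT.
      by rewrite (negbTE nE) !andbF.
    by rewrite setU1K ?jT // eqxx eq_sym (negbTE ji) !andbT.
  rewrite !inE negb_or => /andP[iT /andP[_ jT]].
  by rewrite cardsU1 jT.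
rewrite (eq_bigr (fun U : {set 'I_n.+1} => ((n - #|U|)%:R * beta #|U| - #|U|%:R * beta #|U|.-1) * g U)); last first.
  by move=> U iU; rewrite fid ?(card_noti iU).
rewrite (eq_bigr (fun U : {set 'I_n.+1} => (n - #|U|)%:R * beta #|U| * g U - (#|U|%:R * beta #|U|.-1) * g U)); last first.
  by move=> U _; rewrite mulrBl.
rewrite sumrB -EA.
rewrite (eq_bigr (fun T : {set 'I_n.+1} => \sum_(j in ~: (i |: T)) beta #|T| * g T) _); last first.
  by move=> T iT; rewrite EB.
move: H0; rewrite (eq_bigr (fun T : {set 'I_n.+1} => \sum_(j in ~: (i |: T)) beta #|T| * g (j |: T)
    - \sum_(j in ~: (i |: T)) beta #|T| * g T)); last first.
  by move=> T _; rewrite -sumrB; apply: eq_bigr => j _; rewrite mulrBr.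
rewrite sumrB; lra.
Qed.

Lemma inSome n (T : {set 'I_n}) x : (Some x \in Some @: T) = (x \in T).
Proof. by rewrite mem_imset //; exact: Some_inj. Qed.

Lemma NoneSome n (T : {set 'I_n}) : (None \in Some @: T) = false.
Proof. by apply/imsetP => -[x _]. Qed.

Lemma split_opt (R : realFieldType) n (i : 'I_n) (F : {set option 'I_n} -> R) :
  \sum_(S : {set option 'I_n} | Some i \notin S) F S =
  \sum_(T : {set 'I_n} | i \notin T) (F (Some @: T) + F (None |: Some @: T)).
Proof.
rewrite (bigID (fun S : {set option 'I_n} => None \in S)) /= addrC big_split /=.
pose h' (S : {set option 'I_n}) := [set x | Some x \in S].
congr (_ + _).
  rewrite (reindex_onto (fun T : {set 'I_n} => Some @: T) h'); last first.
    move=> S /andP[_ NS]; apply/setP => -[x|]; rewrite ?inE ?inSome ?NoneSome //=; first by rewrite inE.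
    by apply/esym/negbTE.
  apply: eq_bigl => T; rewrite inSome NoneSome andbT.
  suff -> : h' (Some @: T) == T by rewrite andbT.
  by apply/eqP/setP => x; rewrite inE inSome.
rewrite (reindex_onto (fun T : {set 'I_n} => None |: Some @: T) h'); last first.
  move=> S /andP[_ NS]; apply/setP => -[x|]; rewrite !inE ?inSome /= ?inE ?NS //.
apply: eq_bigl => T; rewrite !inE inSome /= andbT.
suff -> : h' (None |: Some @: T) == T by rewrite andbT.
by apply/eqP/setP => x; rewrite !inE inSome.
Qed.

Lemma gauss (R : realFieldType) m : \sum_(k < m) (k.+1)%:R * 2 = (m * m.+1)%:R :> R.
Proof.
elim: m => [|m IH]; first by rewrite big_ord0.
rewrite big_ord_recr /= IH -natrM -natrD; congr (_%:R); lia.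
Qed.

Lemma fact_neq0 (R : realFieldType) k : (k`!)%:R != 0 :> R.
Proof. by rewrite pnatr_eq0 -lt0n fact_gt0. Qed.

Lemma wsum (R : realFieldType) n (i : 'I_n.+1) :
  \sum_(T : {set 'I_n.+1} | i \notin T) (((#|T|.+1)`! * (n - #|T|)`!)%:R / (n.+2`!)%:R)
   = 1 / 2 :> R.
Proof.
rewrite -mulr_suml (level_sum i (fun t => ((t.+1)`! * (n - t)`!)%:R : R)).
rewrite (eq_bigr (fun k : 'I_n.+1 => (n`!)%:R * (k.+1)%:R : R)); last first.
  move=> k _; rewrite -mulrnA -natrM factS; congr (_%:R); rewrite -(bin_fact (ltnSE (ltn_ord k))); ring.
rewrite -mulr_sumr.
have G := gauss R n.+1.
have -> : \sum_(k < n.+1) (k.+1)%:R = ((n.+1 * n.+2)%:R / 2 : R).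
  by rewrite -G -mulr_suml mulfK // pnatr_eq0.
rewrite !factS !natrM.
have := fact_neq0 R n => h.
field; rewrite h /=.
have hn : 0 <= n%:R :> R := ler0n _ _.
by apply/andP; split; apply: lt0r_neq0; lra.
Qed.

Theorem mainTheorem1 (R : realFieldType) (M : nat) (i : 'I_M)
    (v : {set 'I_M} -> R) (vR : {set option 'I_M} -> R) (a : R)
    (hvpos : 0 < v [set: 'I_M]) (hvRpos : 0 < vR [set: option 'I_M])
    (h1 : forall S : {set 'I_M}, v S = vR [set Some j | j in S])
    (h2 : forall S : {set option 'I_M}, Some i \notin S -> None \in S ->
            vR (Some i |: S) - vR S <= a)
    (h3 : forall Rs Q : {set 'I_M}, Rs \subset Q -> i \notin Q ->
            v (i |: Rs) - v Rs <= v (i |: Q) - v Q) :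
  shapley vR (Some i) <=
    (shapley v i * v [set: 'I_M] + a) / (2 * vR [set: option 'I_M]).
Proof.
move: i v vR a hvpos hvRpos h1 h2 h3; case: M => [[]//|n] i v vR a hvpos hvRpos h1 h2 h3.
set V := v [set: 'I_n.+1] in hvpos *.
set VR := vR [set: option 'I_n.+1] in hvRpos *.
pose g (T : {set 'I_n.+1}) := v (i |: T) - v T.
have Ev : shapley v i * V = \sum_(T : {set 'I_n.+1} | i \notin T)
     ((#|T|`! * (n - #|T|)`!)%:R / (n.+1`!)%:R) * g T.
  rewrite /shapley -/V mulrC mulrA mulfV ?lt0r_neq0 // mul1r card_ord.
  by apply: eq_bigr => T _; rewrite subnAC subn1.
have ER : VR * shapley vR (Some i) = \sum_(T : {set 'I_n.+1} | i \notin T)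
     (((#|T|`! * (n.+1 - #|T|)`!)%:R / (n.+2`!)%:R) * g T +
      (((#|T|.+1)`! * (n - #|T|)`!)%:R / (n.+2`!)%:R) *
        (vR (Some i |: (None |: Some @: T)) - vR (None |: Some @: T))).
  rewrite /shapley -/VR mulrA mulfV ?lt0r_neq0 // mul1r split_opt card_option card_ord.
  apply: eq_bigr => T iT; congr (_ + _).
    rewrite card_imset; last exact: Some_inj.
    rewrite subnAC subn1 /= /g -imsetU1 -!h1 //.
  rewrite cardsU1 NoneSome card_imset; last exact: Some_inj.
  by rewrite add1n subnAC subn1 /= subSS.
have mono : forall (T : {set 'I_n.+1}) j, i \notin T -> j \notin T -> j != i ->
    g T <= g (j |: T).
  move=> T j iT jT ji; apply: h3; first exact: subsetUr.
  by rewrite !inE negb_or eq_sym ji.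
have Hg : \sum_(T : {set 'I_n.+1} | i \notin T)
      ((#|T|`! * (n.+1 - #|T|)`!)%:R / (n.+2`!)%:R) * g T
   <= (\sum_(T : {set 'I_n.+1} | i \notin T)
     ((#|T|`! * (n - #|T|)`!)%:R / (n.+1`!)%:R) * g T) / 2.
  rewrite (eq_bigr (fun T : {set 'I_n.+1} =>
     ((#|T|`! * (n - #|T|)`!)%:R / (n.+1`!)%:R) * g T / 2 +
     (2 * (n.+2`!)%:R)^-1 *
     (((#|T|`! * (n - #|T|)`!)%:R * (n%:R - 2 * #|T|%:R)) * g T))); last first.
    move=> T iT; have tn := card_noti iT.
    have -> : (n.+1 - #|T| = (n - #|T|).+1)%N by lia.
    rewrite (factS (n - #|T|)) (factS n.+1).
    have hF : (n.+1`!)%:R != 0 :> R by apply: fact_neq0.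
    move: (n.+1`!) hF (#|T|`!) ((n - #|T|)`!) => F hF B A.
    rewrite !natrM -[(n - #|T|).+1]addn1 natrD natrB //.
    have hn : 0 <= n%:R :> R := ler0n _ _.
    field; rewrite hF /=.
    by apply: lt0r_neq0; lra.
  rewrite big_split /= -mulr_suml -mulr_sumr.
  have K0 : 0 <= (2 * (n.+2`!)%:R : R)^-1.
    by rewrite invr_ge0 mulr_ge0 // ler0n.
  have := mulr_ge0_le0 K0 (tele mono).
  lra.
have Ha : \sum_(T : {set 'I_n.+1} | i \notin T)
      (((#|T|.+1)`! * (n - #|T|)`!)%:R / (n.+2`!)%:R) *
        (vR (Some i |: (None |: Some @: T)) - vR (None |: Some @: T)) <= a / 2.
  apply: (@le_trans _ _ (\sum_(T : {set 'I_n.+1} | i \notin T)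
      (((#|T|.+1)`! * (n - #|T|)`!)%:R / (n.+2`!)%:R) * a)); last first.
    rewrite -mulr_suml (wsum _ i); lra.
  apply: ler_sum => T iT.
  apply: ler_wpM2l.
    by apply: divr_ge0; apply: ler0n.
  apply: h2; first by rewrite !inE inSome negb_or iT.
  by rewrite !inE eqxx.
have key : VR * shapley vR (Some i) <= (shapley v i * V + a) / 2.
  rewrite ER big_split Ev /=; lra.
rewrite ler_pdivlMr; last by rewrite mulr_gt0.
have -> : shapley vR (Some i) * (2 * VR) = 2 * (VR * shapley vR (Some i)) by ring.
lra.
Qed.
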